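(* Assume $\sigma_1(x)\equiv\sigma_1(0)\ne0$ is constant, so that $\sigma_2(x)=(q-1)\tau'(0)x^2+(q-1)\tau(0)x+q\sigma_1(0)=\tfrac12\sigma_2''(0)(x-a_2)(x-b_2)$, and assume its zeros are real with $0<a_2\le b_2$ and that $\Lambda_q:=\tau'(0)/\sigma_1(0)<0$. Put $a=b_2$ and $$\rho(x)=|x|^{\alpha}x^{\log_qx-1}\,(qa_2/x,\,qa/x;q)_\infty,\qquad q^{\alpha}=\frac{q^{-1}\tfrac12\sigma_2''(0)}{\sigma_1(0)}.$$ Then there exist polynomials $P_n$, $n\in\mathbb{N}_0$, with $P_n$ of degree $n$ a solution of the q-EHT with $\lambda=\lambda_n$, and nonzero constants $d_n^2$, such that for all $m,n\in\mathbb{N}_0$ $$\int_a^{\infty}P_n(x)P_m(x)\rho(x)\,d_{q^{-1}}x=d_n^2\delta_{mn},$$ i.e. orthogonality with respect to $\rho$ supported on $\{q^{-k}a\}_{k\in\mathbb{N}_0}$.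
   Context: Throughout $0<q<1$. For a function $y$ and $\zeta\in\{q,q^{-1}\}$, $D_\zeta y(x)=\frac{y(x)-y(\zeta x)}{(1-\zeta)x}$ for $x\ne0$ and $D_\zeta y(0)=y'(0)$; $[n]_q=\frac{1-q^n}{1-q}$. Let $\sigma_1$ be a real polynomial of degree at most two, $\tau(x)=\tau'(0)x+\tau(0)$ a real polynomial with $\tau'(0)\ne0$, and $\sigma_2(x):=q[\sigma_1(x)+(1-q^{-1})x\tau(x)]$. The q-EHT with parameter $n$ is $\sigma_1(x)D_{q^{-1}}D_qy(x)+\tau(x)D_qy(x)+\lambda_ny(x)=0$, $\lambda_n=-[n]_q\big(\tau'(0)+\tfrac12[n-1]_{q^{-1}}\sigma_1''(0)\big)$. $(\beta;q)_\infty=\prod_{k\ge0}(1-\beta q^k)$, $(\beta_1,\dots,\beta_r;q)_\infty=\prod_i(\beta_i;q)_\infty$. For $q^\alpha=c$ ($c\ne0$), $\alpha$ is any complex number with $e^{\alpha\ln q}=c$ and $|x|^\alpha:=e^{\alpha\ln|x|}$; for $x>0$, $x^{\log_qx-1}:=\exp\big((\log_qx-1)\ln x\big)$. For $a>0$, $\int_a^\infty f(x)\,d_{q^{-1}}x=(q^{-1}-1)a\sum_{j\ge0}q^{-j}f(q^{-j}a)$. *)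

(* Defs.v *)
From Stdlib Require Import Reals Lra.
From Coquelicot Require Import Coquelicot.
Open Scope R_scope.

Definition Dq (zeta : R) (y : R -> R) (x : R) : R :=
  if Req_EM_T x 0 then Derive y 0 else (y x - y (zeta * x)) / ((1 - zeta) * x).

Definition qnum (q : R) (k : Z) : R := (1 - powerRZ q k) / (1 - q).

Definition lambda_n (q : R) (n : nat) (tau1 sigma1pp : R) : R :=
  - qnum q (Z.of_nat n) * (tau1 + / 2 * qnum (/ q) (Z.of_nat n - 1) * sigma1pp).

Definition solves_qEHT (q : R) (sigma1 tau : R -> R) (lam : R) (y : R -> R) : Prop :=
  forall x : R, sigma1 x * Dq (/ q) (Dq q y) x + tau x * Dq q y x + lam * y x = 0.

Definition poly_eval (c : nat -> R) (n : nat) (x : R) : R :=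
  sum_f_R0 (fun k => c k * x ^ k) n.

Fixpoint qprod (beta q : R) (N : nat) : R :=
  match N with
  | O => 1
  | S N' => qprod beta q N' * (1 - beta * q ^ N')
  end.

Definition qpoch_inf (beta q : R) : R := real (Lim_seq (fun N => qprod beta q N)).

(* weight rho(x) = |x|^alpha x^{log_q x - 1} (q a2/x, q a/x; q)_infinity *)
Definition rho (q alpha a2 a : R) (x : R) : R :=
  exp (alpha * ln (Rabs x)) * exp ((ln x / ln q - 1) * ln x)
  * (qpoch_inf (q * a2 / x) q * qpoch_inf (q * a / x) q).

(* terms of the Jackson integral int_a^oo f d_{q^-1}x = (q^-1 - 1) a sum_j q^-j f(q^-j a) *)
Definition jackson_term (q a : R) (f : R -> R) (j : nat) : R :=
  (/ q - 1) * a * ((/ q) ^ j * f ((/ q) ^ j * a)).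

(* Main.v *)
Require Import Defs.
From Stdlib Require Import Reals Lra Lia FunctionalExtensionality Classical.
From Coquelicot Require Import Coquelicot.
Open Scope R_scope.

Fixpoint qn (z : R) (m : nat) : R :=
  match m with O => 0 | S m' => qn z m' + z ^ m' end.

Lemma qn_mul z m : (1 - z) * qn z m = 1 - z ^ m.
Proof. induction m; simpl; [ring|]. rewrite Rmult_plus_distr_l, IHm. ring. Qed.

Definition dq (z : R) (c : nat -> R) (k : nat) : R := c (S k) * qn z (S k).

Lemma poly_S c N x : poly_eval c (S N) x = poly_eval c N x + c (S N) * x ^ (S N).
Proof. reflexivity. Qed.

Lemma poly_diff z c N x :
  poly_eval c (S N) x - poly_eval c (S N) (z * x) = (1 - z) * x * poly_eval (dq z c) N x.
Proof.
  induction N.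
  - unfold poly_eval, dq; simpl. ring.
  - rewrite (poly_S c (S N)), (poly_S c (S N) (z*x)), (poly_S (dq z c)).
    pose proof (qn_mul z (S (S N))) as H.
    rewrite Rpow_mult_distr.
    replace (poly_eval c (S N) x + c (S (S N)) * x ^ S (S N) -
       (poly_eval c (S N) (z * x) + c (S (S N)) * (z ^ S (S N) * x ^ S (S N))))
      with ((poly_eval c (S N) x - poly_eval c (S N) (z * x)) +
            c (S (S N)) * ((1 - z ^ S (S N)) * x ^ S (S N))) by ring.
    rewrite IHN, <- H. unfold dq. simpl. ring.
Qed.

Lemma poly_at0 d N : poly_eval d N 0 = d 0%nat.
Proof. induction N. - unfold poly_eval; simpl; ring. - rewrite poly_S, IHN; simpl; ring. Qed.

Lemma poly_derive0 c N : is_derive (poly_eval c (S N)) 0 (c 1%nat).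
Proof.
  induction N.
  - unfold poly_eval; simpl. auto_derive; auto. ring.
  - change (is_derive (fun x => poly_eval c (S N) x + c (S (S N)) * x ^ (S (S N))) 0 (c 1%nat)).
    replace (c 1%nat) with (c 1%nat + 0) by ring.
    apply (is_derive_plus (poly_eval c (S N)) (fun x => c (S (S N)) * x ^ (S (S N)))); auto.
    evar (dd : R).
    replace 0 with dd at 2. 2: { unfold dd; reflexivity. }
    auto_derive; auto. unfold dd. simpl. ring.
Qed.

Lemma Dq_poly z c N x : z <> 1 ->
  Dq z (poly_eval c (S N)) x = poly_eval (dq z c) N x.
Proof.
  intros Hz. unfold Dq. destruct (Req_EM_T x 0) as [->|Hx].
  - rewrite (is_derive_unique _ _ _ (poly_derive0 c N)), poly_at0. unfold dq. simpl. ring.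
  - rewrite poly_diff. field. split; auto. intro; apply Hz; lra.
Qed.

Lemma poly_ext_S d N : d (S N) = 0 -> poly_eval d (S N) = poly_eval d N.
Proof. intros H. apply functional_extensionality; intro x. rewrite poly_S, H; ring. Qed.

Definition shift (d : nat -> R) (k : nat) : R := match k with O => 0 | S k' => d k' end.

Lemma poly_shift d N x : x * poly_eval d N x = poly_eval (shift d) (S N) x.
Proof.
  induction N.
  - unfold poly_eval; simpl; ring.
  - rewrite (poly_S (shift d)), poly_S, <- IHN. simpl. ring.
Qed.

Lemma poly_comb a b e f u v w z N x :
  poly_eval (fun k => a * u k + b * v k + e * w k + f * z k) N x
  = a * poly_eval u N x + b * poly_eval v N x + e * poly_eval w N x + f * poly_eval z N x.
Proof.
  induction N.
  - unfold poly_eval; simpl; ring.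
  - rewrite !poly_S, IHN. ring.
Qed.

Lemma poly_zero e N x : (forall k, e k = 0) -> poly_eval e N x = 0.
Proof.
  intros H. induction N.
  - unfold poly_eval; simpl; rewrite H; ring.
  - rewrite poly_S, IHN, H; ring.
Qed.

Lemma qn_lt z k n : 0 < z -> (k < n)%nat -> qn z k < qn z n.
Proof.
  intros Hz Hkn. induction Hkn.
  - simpl. pose proof (pow_lt z k Hz). lra.
  - simpl. pose proof (pow_lt z m Hz). lra.
Qed.

Fixpoint cp (q s0 t0 t1 : R) (n m : nat) : R * R :=
  match m with
  | O => (1, 0)
  | S m' => let p := cp q s0 t0 t1 n m' in
      let k := (n - S m')%nat in
      ( - (s0 * qn q (S (S k)) * qn (/ q) (S k) * snd p + t0 * qn q (S k) * fst p)
          / (t1 * (qn q k - qn q n)), fst p)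
  end.

Definition cc q s0 t0 t1 n k : R :=
  if (k <=? n)%nat then fst (cp q s0 t0 t1 n (n - k)) else 0.

Lemma cc_big q s0 t0 t1 n k : (n < k)%nat -> cc q s0 t0 t1 n k = 0.
Proof. intros H. unfold cc. destruct (Nat.leb_spec k n); [lia|auto]. Qed.

Lemma cc_nn q s0 t0 t1 n : cc q s0 t0 t1 n n = 1.
Proof. unfold cc. rewrite Nat.leb_refl, Nat.sub_diag. reflexivity. Qed.

Lemma cp_snd q s0 t0 t1 n m : (m <= n)%nat ->
  snd (cp q s0 t0 t1 n m) = cc q s0 t0 t1 n (S (n - m)).
Proof.
  destruct m as [|m']; intros Hm.
  - simpl. rewrite cc_big; auto; lia.
  - simpl. unfold cc. destruct (Nat.leb_spec (S (n - S m')) n); [|lia].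
    f_equal. f_equal. lia.
Qed.

Lemma cc_rec q s0 t0 t1 n k : 0 < q -> t1 <> 0 ->
  s0 * (cc q s0 t0 t1 n (S (S k)) * qn q (S (S k)) * qn (/q) (S k))
  + t0 * (cc q s0 t0 t1 n (S k) * qn q (S k))
  + t1 * (qn q k - qn q n) * cc q s0 t0 t1 n k = 0.
Proof.
  intros Hq Ht.
  destruct (Nat.lt_ge_cases k n) as [Hk|Hk].
  - assert (Hd : qn q k - qn q n <> 0) by (pose proof (qn_lt q k n Hq Hk); lra).
    unfold cc at 3. destruct (Nat.leb_spec k n); [|lia].
    replace (n - k)%nat with (S (n - S k)) by lia.
    cbn [cp]. cbv zeta. cbn [fst].
    rewrite cp_snd by lia.
    replace (n - S (n - S k))%nat with k by lia.
    replace (S (n - (n - S k)))%nat with (S (S k)) by lia.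
    replace (fst (cp q s0 t0 t1 n (n - S k))) with (cc q s0 t0 t1 n (S k)).
    2: { unfold cc. destruct (Nat.leb_spec (S k) n); [|lia]. reflexivity. }
    field. split; auto.
  - rewrite (cc_big _ _ _ _ n (S k)), (cc_big _ _ _ _ n (S (S k))) by lia.
    destruct (Nat.eq_dec k n) as [->|Hne].
    + ring.
    + rewrite cc_big by lia. ring.
Qed.

Lemma lambda_qn q n t1 : q <> 1 -> lambda_n q n t1 0 = - (qn q n) * t1.
Proof.
  intros Hq. unfold lambda_n, qnum. rewrite <- pow_powerRZ.
  replace ((1 - q ^ n) / (1 - q)) with (qn q n).
  - ring.
  - rewrite <- qn_mul. field. intro; apply Hq; lra.
Qed.

Lemma cc_solves q s0 t0 t1 n : 0 < q < 1 -> t1 <> 0 ->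
  solves_qEHT q (fun _ => s0) (fun x => t1 * x + t0) (lambda_n q n t1 0)
    (poly_eval (cc q s0 t0 t1 n) n).
Proof.
  intros Hq Ht.
  set (c := cc q s0 t0 t1 n).
  assert (Hc : forall k, (n < k)%nat -> c k = 0) by (intros; apply cc_big; auto).
  rewrite lambda_qn by lra.
  assert (E1 : Dq q (poly_eval c n) = poly_eval (dq q c) n).
  { rewrite <- (poly_ext_S c n) by (apply Hc; lia).
    apply functional_extensionality; intro; apply Dq_poly; lra. }
  assert (Hiq : / q <> 1).
  { assert (1 < / q). { rewrite <- Rinv_1. apply Rinv_lt_contravar; lra. } lra. }
  assert (E2 : Dq (/ q) (poly_eval (dq q c) n) = poly_eval (dq (/ q) (dq q c)) n).
  { rewrite <- (poly_ext_S (dq q c) n).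
    - apply functional_extensionality; intro; apply Dq_poly; auto.
    - unfold dq. rewrite Hc by lia. ring. }
  intro x. rewrite E1, E2.
  transitivity (poly_eval (fun k => s0 * dq (/ q) (dq q c) k + t1 * shift (dq q c) k
                   + t0 * dq q c k + (- qn q n * t1) * c k) (S n) x).
  - rewrite poly_comb, <- poly_shift.
    rewrite (poly_ext_S (dq (/q) (dq q c)) n), (poly_ext_S (dq q c) n), (poly_ext_S c n).
    + ring.
    + apply Hc; lia.
    + unfold dq. rewrite Hc by lia. ring.
    + unfold dq. rewrite Hc by lia. ring.
  - apply poly_zero. intro k.
    assert (Hs : shift (dq q c) k = c k * qn q k).
    { destruct k; simpl; [ring| reflexivity]. }
    rewrite Hs. pose proof (cc_rec q s0 t0 t1 n k ltac:(lra) Ht) as R.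
    unfold dq. fold c in R. lra.
Qed.

Lemma qprod_shift b q N : qprod b q (S N) = (1 - b) * qprod (b * q) q N.
Proof.
  induction N.
  - simpl; ring.
  - change (qprod b q (S (S N))) with (qprod b q (S N) * (1 - b * q ^ (S N))).
    rewrite IHN. simpl. ring.
Qed.

Lemma real_Rbar_mult (a : R) l : real (Rbar_mult a l) = a * real l.
Proof.
  destruct l as [r| |]; simpl; [ring| |];
  unfold Rbar_mult, Rbar_mult'; repeat destruct Rle_dec; repeat destruct Rle_lt_or_eq_dec;
  simpl; ring.
Qed.

Lemma qpoch_shift b q : qpoch_inf b q = (1 - b) * qpoch_inf (b * q) q.
Proof.
  unfold qpoch_inf. rewrite <- Lim_seq_incr_1.
  rewrite (Lim_seq_ext _ (fun N => (1 - b) * qprod (b * q) q N)) by (intro; apply qprod_shift).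
  rewrite Lim_seq_scal_l. apply real_Rbar_mult.
Qed.

Lemma one_minus_ge u : 0 <= u < 1 -> exp (- (u / (1 - u))) <= 1 - u.
Proof.
  intros Hu. pose proof (exp_ineq1_le (u / (1 - u))) as H.
  rewrite exp_Ropp.
  replace (1 + u / (1 - u)) with (/ (1 - u)) in H by (field; lra).
  assert (H0 : / exp (u / (1 - u)) <= / / (1 - u)).
  { apply Rinv_le_contravar; auto. apply Rinv_0_lt_compat; lra. }
  rewrite Rinv_inv in H0. exact H0.
Qed.

Lemma pow_le1 q N : 0 <= q < 1 -> 0 <= q ^ N <= 1.
Proof.
  intros Hq. destruct N. simpl; lra.
  pose proof (pow_lt_1_compat q (S N) Hq ltac:(lia)). lra.
Qed.

Lemma exp_le x y : x <= y -> exp x <= exp y.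
Proof. intros [H|H]. left; apply exp_increasing; auto. subst; lra. Qed.

Lemma qprod_bounds b q N : 0 < q < 1 -> 0 <= b < 1 ->
  exp (- (b / (1 - b)) * qn q N) <= qprod b q N <= 1.
Proof.
  intros Hq Hb. induction N.
  - simpl. rewrite Rmult_0_r, exp_0. lra.
  - change (qprod b q (S N)) with (qprod b q N * (1 - b * q ^ N)).
    simpl qn.
    pose proof (pow_le1 q N ltac:(lra)) as HqN.
    assert (Hu : 0 <= b * q ^ N <= b) by nra.
    pose proof (one_minus_ge (b * q ^ N) ltac:(lra)) as H1.
    assert (H3 : b * q ^ N / (1 - b * q ^ N) <= b / (1 - b) * q ^ N).
    { unfold Rdiv. replace (b * / (1 - b) * q ^ N) with (b * q ^ N * / (1 - b)) by ring.
      apply Rmult_le_compat_l; [lra|]. apply Rinv_le_contravar; lra. }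
    assert (H2 : exp (- (b / (1 - b)) * q ^ N) <= exp (- (b * q ^ N / (1 - b * q ^ N)))).
    { apply exp_le. lra. }
    replace (- (b / (1 - b)) * (qn q N + q ^ N)) with
      (- (b / (1 - b)) * qn q N + - (b / (1 - b)) * q ^ N) by ring.
    rewrite exp_plus.
    pose proof (exp_pos (- (b / (1 - b)) * qn q N)).
    pose proof (exp_pos (- (b / (1 - b)) * q ^ N)).
    split.
    + apply Rmult_le_compat; lra.
    + nra.
Qed.

Lemma qn_le q N : 0 < q < 1 -> 0 <= qn q N <= / (1 - q).
Proof.
  intros Hq. pose proof (qn_mul q N). pose proof (pow_le1 q N ltac:(lra)).
  assert (qn q N = (1 - q ^ N) / (1 - q)) by (rewrite <- H; field; lra).
  rewrite H1. split.
  - apply Rmult_le_pos; [lra|]. left; apply Rinv_0_lt_compat; lra.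
  - unfold Rdiv. rewrite <- (Rmult_1_l (/ (1 - q))) at 2.
    apply Rmult_le_compat_r; [left; apply Rinv_0_lt_compat|]; lra.
Qed.

Lemma qpoch_pos b q : 0 < q < 1 -> 0 <= b < 1 -> 0 < qpoch_inf b q.
Proof.
  intros Hq Hb.
  set (m := exp (- (b / (1 - b)) * / (1 - q))).
  assert (Hm : 0 < m) by apply exp_pos.
  assert (Hlow : forall N, m <= qprod b q N).
  { intro N. eapply Rle_trans; [|apply qprod_bounds; auto].
    apply exp_le. pose proof (qn_le q N Hq).
    assert (0 <= b / (1 - b)) by (apply Rmult_le_pos; [lra| left; apply Rinv_0_lt_compat; lra]).
    nra. }
  assert (L1 := Lim_seq_le_loc (fun _ => m) (qprod b q) (filter_forall _ Hlow)).
  assert (L2 := Lim_seq_le_loc (qprod b q) (fun _ => 1)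
     (filter_forall _ (fun N => proj2 (qprod_bounds b q N Hq Hb)))).
  rewrite Lim_seq_const in L1, L2.
  unfold qpoch_inf. destruct (Lim_seq (qprod b q)); simpl in *; try contradiction; lra.
Qed.

Lemma rho_pos q alpha a2 b2 x : 0 < q < 1 -> 0 < a2 -> a2 <= b2 -> b2 <= x ->
  0 < rho q alpha a2 b2 x.
Proof.
  intros Hq Ha Hab Hx. unfold rho.
  assert (0 <= q * a2 / x < 1).
  { split. apply Rmult_le_pos; [nra| left; apply Rinv_0_lt_compat; lra].
    apply (Rmult_lt_reg_r x); [lra|]. unfold Rdiv. rewrite Rmult_assoc, Rinv_l by lra. nra. }
  assert (0 <= q * b2 / x < 1).
  { split. apply Rmult_le_pos; [nra| left; apply Rinv_0_lt_compat; lra].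
    apply (Rmult_lt_reg_r x); [lra|]. unfold Rdiv. rewrite Rmult_assoc, Rinv_l by lra. nra. }
  pose proof (qpoch_pos (q * a2 / x) q Hq H).
  pose proof (qpoch_pos (q * b2 / x) q Hq H0).
  pose proof (exp_pos (alpha * ln (Rabs x))).
  pose proof (exp_pos ((ln x / ln q - 1) * ln x)).
  apply Rmult_lt_0_compat; apply Rmult_lt_0_compat; auto.
Qed.

Lemma rho_step q alpha a2 b2 x : 0 < q < 1 -> 0 < a2 -> 0 < x ->
  exp (alpha * ln q) = / (a2 * b2) ->
  rho q alpha a2 b2 (/ q * x) * ((x - q * a2) * (x - q * b2))
  = rho q alpha a2 b2 x * (a2 * b2 * q ^ 2).
Proof.
  intros Hq Ha Hx Hal.
  assert (Hiq : 0 < / q) by (apply Rinv_0_lt_compat; lra).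
  assert (Hlnq : ln q < 0) by (rewrite <- ln_1; apply ln_increasing; lra).
  assert (Hab : a2 * b2 <> 0).
  { intro E. rewrite E, Rinv_0 in Hal. pose proof (exp_pos (alpha * ln q)). lra. }
  assert (Hl : ln (/ q * x) = ln x - ln q) by (rewrite ln_mult, ln_Rinv by lra; ring).
  assert (0 < / q * x) by (apply Rmult_lt_0_compat; lra).
  unfold rho. rewrite !Rabs_right by lra. rewrite Hl.
  assert (H1 : exp (alpha * (ln x - ln q)) = exp (alpha * ln x) * (a2 * b2)).
  { replace (alpha * (ln x - ln q)) with (alpha * ln x + - (alpha * ln q)) by ring.
    rewrite exp_plus, exp_Ropp, Hal, Rinv_inv. reflexivity. }
  assert (H2 : exp (((ln x - ln q) / ln q - 1) * (ln x - ln q))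
               = exp ((ln x / ln q - 1) * ln x) * (q * q / (x * x))).
  { replace (((ln x - ln q) / ln q - 1) * (ln x - ln q)) with
      ((ln x / ln q - 1) * ln x + ((ln q + ln q) + - (ln x + ln x))) by (field; lra).
    rewrite !exp_plus, exp_Ropp, !exp_plus, !exp_ln by lra. field. lra. }
  assert (H3 : forall c, q * c / (/ q * x) = q * c / x * q) by (intro; field; lra).
  rewrite H1, H2, !H3.
  rewrite (qpoch_shift (q * a2 / x)), (qpoch_shift (q * b2 / x)).
  field. lra.
Qed.

Definition xj (q b2 : R) (j : nat) : R := (/ q) ^ j * b2.
Definition Wt q alpha a2 b2 j := jackson_term q b2 (rho q alpha a2 b2) j.
Definition Aop q s0 t0 t1 x := q * (s0 + (1 - / q) * x * (t1 * x + t0)) / ((1 - q) ^ 2 * x ^ 2).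
Definition Bop q s0 x := q ^ 2 * s0 / ((1 - q) ^ 2 * x ^ 2).
Definition Lf q s0 t0 t1 (y : R -> R) x := s0 * Dq (/ q) (Dq q y) x + (t1 * x + t0) * Dq q y x.

Lemma xj_S q b2 j : xj q b2 (S j) = / q * xj q b2 j.
Proof. unfold xj; simpl; ring. Qed.

Lemma xj_ge q b2 j : 0 < q < 1 -> 0 < b2 -> b2 <= xj q b2 j.
Proof.
  intros Hq Hb. unfold xj.
  assert (1 <= / q). { rewrite <- Rinv_1. apply Rinv_le_contravar; lra. }
  pose proof (pow_R1_Rle (/ q) j H). nra.
Qed.

Lemma xj_qpow q b2 j : 0 < q -> xj q b2 j * q ^ j = b2.
Proof.
  intros Hq. unfold xj. rewrite Rmult_comm, <- Rmult_assoc, <- Rpow_mult_distr.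
  rewrite Rinv_r, pow1 by lra. ring.
Qed.

Lemma Lf_AB q s0 t0 t1 y x : 0 < q < 1 -> x <> 0 ->
  Lf q s0 t0 t1 y x = Aop q s0 t0 t1 x * (y (q * x) - y x) + Bop q s0 x * (y (/ q * x) - y x).
Proof.
  intros Hq Hx. unfold Lf, Aop, Bop, Dq.
  destruct (Req_EM_T x 0) as [E|_]; [contradiction|].
  destruct (Req_EM_T (/ q * x) 0) as [E|_].
  { exfalso. apply Rmult_integral in E. destruct E; [|auto]. 
    pose proof (Rinv_0_lt_compat q ltac:(lra)); lra. }
  replace (q * (/ q * x)) with x by (field; lra).
  field. repeat split; try lra.
Qed.

Lemma Wt_eq q alpha a2 b2 j :
  Wt q alpha a2 b2 j = (/ q - 1) * b2 * ((/ q) ^ j * rho q alpha a2 b2 (xj q b2 j)).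
Proof. reflexivity. Qed.

Lemma Wt_pos q alpha a2 b2 j : 0 < q < 1 -> 0 < a2 -> a2 <= b2 -> 0 < Wt q alpha a2 b2 j.
Proof.
  intros Hq Ha Hab. rewrite Wt_eq.
  assert (1 < / q). { rewrite <- Rinv_1. apply Rinv_lt_contravar; lra. }
  pose proof (pow_lt (/ q) j ltac:(lra)).
  pose proof (rho_pos q alpha a2 b2 (xj q b2 j) Hq Ha Hab (xj_ge q b2 j Hq ltac:(lra))).
  apply Rmult_lt_0_compat; [apply Rmult_lt_0_compat; lra | apply Rmult_lt_0_compat; lra].
Qed.

Lemma Wt_step q alpha a2 b2 j : 0 < q < 1 -> 0 < a2 -> a2 <= b2 ->
  exp (alpha * ln q) = / (a2 * b2) ->
  Wt q alpha a2 b2 (S j) * ((xj q b2 j - q * a2) * (xj q b2 j - q * b2))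
  = Wt q alpha a2 b2 j * (q * a2 * b2).
Proof.
  intros Hq Ha Hab Hal. rewrite !Wt_eq, xj_S.
  pose proof (xj_ge q b2 j Hq ltac:(lra)).
  replace ((/ q - 1) * b2 * ((/ q) ^ S j * rho q alpha a2 b2 (/ q * xj q b2 j)) *
     ((xj q b2 j - q * a2) * (xj q b2 j - q * b2))) with
    ((/ q - 1) * b2 * ((/ q) ^ S j * (rho q alpha a2 b2 (/ q * xj q b2 j) *
     ((xj q b2 j - q * a2) * (xj q b2 j - q * b2))))) by ring.
  rewrite rho_step by (auto; lra).
  simpl. field. lra.
Qed.

Lemma balance q s0 t0 t1 alpha a2 b2 j : 0 < q < 1 -> 0 < a2 -> a2 <= b2 ->
  (forall x : R, q * (s0 + (1 - / q) * x * (t1 * x + t0)) = (q - 1) * t1 * (x - a2) * (x - b2)) ->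
  exp (alpha * ln q) = / (a2 * b2) ->
  Wt q alpha a2 b2 (S j) * Aop q s0 t0 t1 (xj q b2 (S j))
  = Wt q alpha a2 b2 j * Bop q s0 (xj q b2 j).
Proof.
  intros Hq Ha Hab Hs Hal.
  pose proof (Wt_step q alpha a2 b2 j Hq Ha Hab Hal) as HW.
  pose proof (Hs 0) as H0.
  pose proof (xj_ge q b2 j Hq ltac:(lra)) as Hx.
  unfold Aop, Bop. rewrite Hs, xj_S.
  set (X := xj q b2 j) in *. set (W1 := Wt q alpha a2 b2 (S j)) in *.
  set (W0 := Wt q alpha a2 b2 j) in *.
  replace ((q - 1) * t1 * (/ q * X - a2) * (/ q * X - b2) / ((1 - q) ^ 2 * (/ q * X) ^ 2))
    with ((q - 1) * t1 * ((X - q * a2) * (X - q * b2)) / ((1 - q) ^ 2 * X ^ 2))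
    by (field; split; lra).
  replace (W1 * ((q - 1) * t1 * ((X - q * a2) * (X - q * b2)) / ((1 - q) ^ 2 * X ^ 2)))
    with ((W1 * ((X - q * a2) * (X - q * b2))) * ((q - 1) * t1) / ((1 - q) ^ 2 * X ^ 2))
    by (field; split; lra).
  rewrite HW.
  replace (q ^ 2 * s0) with (q * (q * (s0 + (1 - / q) * 0 * (t1 * 0 + t0)))) by (field; lra).
  rewrite H0. field. split; lra.
Qed.

Lemma tele q s0 t0 t1 alpha a2 b2 (y z : R -> R) J : 0 < q < 1 -> 0 < a2 -> a2 <= b2 ->
  (forall x : R, q * (s0 + (1 - / q) * x * (t1 * x + t0)) = (q - 1) * t1 * (x - a2) * (x - b2)) ->
  exp (alpha * ln q) = / (a2 * b2) ->
  sum_f_R0 (fun j => Wt q alpha a2 b2 j *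
     (Lf q s0 t0 t1 y (xj q b2 j) * z (xj q b2 j) - Lf q s0 t0 t1 z (xj q b2 j) * y (xj q b2 j))) J
  = Wt q alpha a2 b2 J * Bop q s0 (xj q b2 J) *
     (y (xj q b2 (S J)) * z (xj q b2 J) - z (xj q b2 (S J)) * y (xj q b2 J)).
Proof.
  intros Hq Ha Hab Hs Hal.
  assert (Hx : forall j, xj q b2 j <> 0) by (intro j; pose proof (xj_ge q b2 j Hq ltac:(lra)); lra).
  assert (HqS : forall j, q * xj q b2 (S j) = xj q b2 j) by (intro; rewrite xj_S; field; lra).
  induction J.
  - simpl. rewrite !Lf_AB by auto.
    assert (HA : Aop q s0 t0 t1 (xj q b2 0) = 0).
    { unfold Aop. rewrite Hs. unfold xj. simpl. rewrite Rmult_1_l. unfold Rdiv. ring. }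
    rewrite HA, <- !xj_S. ring.
  - simpl sum_f_R0. rewrite IHJ. rewrite !(Lf_AB _ _ _ _ _ (xj q b2 (S J))) by auto.
    rewrite !HqS, <- !xj_S.
    rewrite <- (balance q s0 t0 t1 alpha a2 b2 J) by auto.
    ring.
Qed.

Lemma ser_mono q alpha a2 b2 k : 0 < q < 1 -> 0 < a2 -> a2 <= b2 ->
  exp (alpha * ln q) = / (a2 * b2) ->
  ex_series (fun j => Wt q alpha a2 b2 j * xj q b2 j ^ k).
Proof.
  intros Hq Ha Hab Hal.
  set (a := fun j => Wt q alpha a2 b2 j * xj q b2 j ^ k).
  assert (Hxg : forall j, b2 <= xj q b2 j) by (intro; apply xj_ge; lra).
  assert (Hpos : forall j, 0 < a j).
  { intro j. unfold a. apply Rmult_lt_0_compat. apply Wt_pos; auto.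
    apply pow_lt. pose proof (Hxg j); lra. }
  apply ex_series_Rabs.
  set (K := q * a2 * b2 * (/ q) ^ k).
  set (C := K / ((1 - q) ^ 2 * b2 ^ 2)).
  apply (ex_series_DAlembert a 0); [lra| intro n; pose proof (Hpos n); lra |].
  apply (is_lim_seq_le_le (fun _ => 0) _ (fun j => C * (q ^ 2) ^ j)).
  - intro j. rewrite Rabs_right.
    2: { left. apply Rdiv_lt_0_compat; apply Hpos. }
    pose proof (Hpos j). pose proof (Hpos (S j)).
    split. left; apply Rdiv_lt_0_compat; auto.
    pose proof (Wt_step q alpha a2 b2 j Hq Ha Hab Hal) as HW.
    pose proof (Hxg j) as Hx.
    pose proof (xj_qpow q b2 j ltac:(lra)) as Hqp.
    set (X := xj q b2 j) in *.
    set (W1 := Wt q alpha a2 b2 (S j)) in *. set (W0 := Wt q alpha a2 b2 j) in *.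
    assert (HW0 : 0 < W0) by (apply Wt_pos; auto).
    assert (HD1 : (1 - q) * X <= X - q * a2) by nra.
    assert (HD2 : (1 - q) * X <= X - q * b2) by nra.
    assert (HE : 0 < (1 - q) * X) by nra.
    assert (HD : ((1 - q) * X) ^ 2 <= (X - q * a2) * (X - q * b2)) by (simpl; nra).
    assert (Hratio : a (S j) / a j = W1 / W0 * (/ q) ^ k).
    { unfold a. rewrite xj_S. fold X W1 W0. rewrite Rpow_mult_distr. field.
      split; [lra|]. apply pow_nonzero; lra. }
    rewrite Hratio.
    assert (HDn : (X - q * a2) * (X - q * b2) <> 0) by (apply Rgt_not_eq; nra).
    assert (HD1n : X - q * a2 <> 0) by (apply Rgt_not_eq; nra).
    assert (HD2n : X - q * b2 <> 0) by (apply Rgt_not_eq; nra).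
    assert (HW0n : W0 <> 0) by lra.
    assert (HW1 : W1 = W0 * (q * a2 * b2) / ((X - q * a2) * (X - q * b2))).
    { rewrite <- HW. field. repeat split; auto. }
    rewrite HW1.
    replace (W0 * (q * a2 * b2) / ((X - q * a2) * (X - q * b2)) / W0 * (/ q) ^ k)
      with (K / ((X - q * a2) * (X - q * b2))) by (unfold K; field; repeat split; auto).
    assert (HK : 0 < K).
    { unfold K. apply Rmult_lt_0_compat. apply Rmult_lt_0_compat; [apply Rmult_lt_0_compat|]; lra. apply pow_lt. apply Rinv_0_lt_compat; lra. }
    apply Rle_trans with (K / (((1 - q) * X) ^ 2)).
    + apply Rmult_le_compat_l; [lra|]. apply Rinv_le_contravar; [nra| auto].
    + right. unfold C. rewrite <- pow_mult.
      replace (2 * j)%nat with (j * 2)%nat by lia. rewrite pow_mult.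
      rewrite <- Hqp. field. split; [|lra]. apply pow_nonzero; lra.
  - apply is_lim_seq_const.
  - replace (Finite 0) with (Rbar_mult C 0) by (simpl; f_equal; ring).
    apply is_lim_seq_scal_l. apply is_lim_seq_geom.
    rewrite Rabs_right; [|nra]. nra.
Qed.

Lemma exs_plus (a b : nat -> R) : ex_series a -> ex_series b -> ex_series (fun n => a n + b n).
Proof. intros H1 H2. exact (ex_series_plus a b H1 H2). Qed.
Lemma exs_scal (c : R) (a : nat -> R) : ex_series a -> ex_series (fun n => c * a n).
Proof. intros H. exact (ex_series_scal c a H). Qed.

Lemma exs_ext (a b : nat -> R) : (forall n, a n = b n) -> ex_series a -> ex_series b.
Proof. intros H1 H2. exact (ex_series_ext a b H1 H2). Qed.

Lemma ser_poly1 q alpha a2 b2 c N : 0 < q < 1 -> 0 < a2 -> a2 <= b2 ->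
  exp (alpha * ln q) = / (a2 * b2) -> forall k,
  ex_series (fun j => Wt q alpha a2 b2 j * (xj q b2 j ^ k * poly_eval c N (xj q b2 j))).
Proof.
  intros Hq Ha Hab Hal. induction N; intro k.
  - apply (exs_ext (fun j => c 0%nat * (Wt q alpha a2 b2 j * xj q b2 j ^ k))).
    + intro j. unfold poly_eval. simpl. ring.
    + apply exs_scal, ser_mono; auto.
  - apply (exs_ext (fun j => Wt q alpha a2 b2 j * (xj q b2 j ^ k * poly_eval c N (xj q b2 j))
        + c (S N) * (Wt q alpha a2 b2 j * xj q b2 j ^ (k + S N)))).
    + intro j. rewrite poly_S, pow_add. ring.
    + apply exs_plus; [apply IHN| apply exs_scal, ser_mono]; auto.
Qed.

Lemma ser_poly2 q alpha a2 b2 c N d M : 0 < q < 1 -> 0 < a2 -> a2 <= b2 ->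
  exp (alpha * ln q) = / (a2 * b2) ->
  ex_series (fun j => Wt q alpha a2 b2 j * (poly_eval c N (xj q b2 j) * poly_eval d M (xj q b2 j))).
Proof.
  intros Hq Ha Hab Hal. induction N.
  - apply (exs_ext (fun j => c 0%nat * (Wt q alpha a2 b2 j * (xj q b2 j ^ 0 * poly_eval d M (xj q b2 j))))).
    + intro j. change (poly_eval c 0 (xj q b2 j)) with (c 0%nat * xj q b2 j ^ 0). ring.
    + apply exs_scal, ser_poly1; auto.
  - apply (exs_ext (fun j => Wt q alpha a2 b2 j * (poly_eval c N (xj q b2 j) * poly_eval d M (xj q b2 j))
        + c (S N) * (Wt q alpha a2 b2 j * (xj q b2 j ^ (S N) * poly_eval d M (xj q b2 j))))).
    + intro j. rewrite poly_S. ring.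
    + apply exs_plus; [apply IHN| apply exs_scal, ser_poly1]; auto.
Qed.

Lemma poly_scale c N a x : poly_eval c N (a * x) = poly_eval (fun k => c k * a ^ k) N x.
Proof.
  induction N.
  - unfold poly_eval; simpl; ring.
  - rewrite !poly_S, IHN, Rpow_mult_distr. ring.
Qed.

Lemma bd_lim q s0 alpha a2 b2 c N d M : 0 < q < 1 -> 0 < a2 -> a2 <= b2 ->
  exp (alpha * ln q) = / (a2 * b2) ->
  is_lim_seq (fun J => Wt q alpha a2 b2 J * Bop q s0 (xj q b2 J) *
     (poly_eval c N (xj q b2 (S J)) * poly_eval d M (xj q b2 J)
      - poly_eval d M (xj q b2 (S J)) * poly_eval c N (xj q b2 J))) 0.
Proof.
  intros Hq Ha Hab Hal.
  set (c' := fun k => c k * (/ q) ^ k). set (d' := fun k => d k * (/ q) ^ k).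
  set (K := q ^ 2 * s0 / ((1 - q) ^ 2 * b2 ^ 2)).
  apply (is_lim_seq_ext (fun J => K * ((q ^ 2) ^ J *
     (Wt q alpha a2 b2 J * (poly_eval c' N (xj q b2 J) * poly_eval d M (xj q b2 J))
      - Wt q alpha a2 b2 J * (poly_eval d' M (xj q b2 J) * poly_eval c N (xj q b2 J)))))).
  - intro J. rewrite !xj_S, !poly_scale. fold c' d'.
    pose proof (xj_qpow q b2 J ltac:(lra)) as Hqp.
    pose proof (xj_ge q b2 J Hq ltac:(lra)).
    unfold Bop, K. rewrite <- pow_mult.
    replace (2 * J)%nat with (J * 2)%nat by lia. rewrite pow_mult.
    replace (b2 ^ 2) with ((xj q b2 J * q ^ J) ^ 2) by (rewrite Hqp; reflexivity). field.
    repeat split; try lra; apply pow_nonzero; lra.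
  - replace (Finite 0) with (Rbar_mult K (0 * (0 - 0))) by (simpl; f_equal; ring).
    apply is_lim_seq_scal_l. apply is_lim_seq_mult'.
    + apply is_lim_seq_geom. rewrite Rabs_right; nra.
    + apply is_lim_seq_minus'; apply ex_series_lim_0, ser_poly2; auto.
Qed.

Lemma nonvanish q b2 c N k : 0 < q < 1 -> 0 < b2 -> c N <> 0 ->
  ~ (forall j, (k <= j <= k + N)%nat -> poly_eval c N (xj q b2 j) = 0).
Proof.
  intros Hq Hb. revert c k. induction N; intros c k Hc H.
  - specialize (H k ltac:(lia)). unfold poly_eval in H. simpl in H. apply Hc. lra.
  - apply (IHN (dq q c) (S k)).
    + unfold dq. pose proof (qn_lt q 0 (S N) ltac:(lra) ltac:(lia)). simpl qn in H0 at 1.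
      apply Rmult_integral_contrapositive; split; auto. lra.
    + intros j Hj. rewrite <- (Dq_poly q c N) by lra. unfold Dq.
      pose proof (xj_ge q b2 j Hq Hb).
      destruct (Req_EM_T (xj q b2 j) 0); [lra|].
      destruct j as [|j']; [lia|].
      replace (q * xj q b2 (S j')) with (xj q b2 j') by (rewrite xj_S; field; lra).
      rewrite (H (S j')), (H j') by lia. unfold Rdiv. ring.
Qed.

Lemma sum_nonneg (a : nat -> R) J : (forall j, 0 <= a j) -> 0 <= sum_f_R0 a J.
Proof. intros H. induction J; simpl; [apply H|]. pose proof (H (S J)); lra. Qed.

Lemma sum_ge_term (a : nat -> R) j0 J : (forall j, 0 <= a j) -> (j0 <= J)%nat ->
  a j0 <= sum_f_R0 a J.
Proof.
  intros H HJ. induction HJ.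
  - destruct j0; simpl; [lra|]. pose proof (sum_nonneg a j0 H). lra.
  - simpl. pose proof (H (S m)). lra.
Qed.

Lemma sum_scal_l (c : R) (a : nat -> R) N : sum_f_R0 (fun i => c * a i) N = c * sum_f_R0 a N.
Proof. induction N; simpl; [|rewrite IHN]; ring. Qed.

Theorem theorem5p8 (q s0 t0 t1 a2 b2 alpha : R) :
  0 < q < 1 ->
  s0 <> 0 ->
  t1 <> 0 ->
  (forall x : R, q * (s0 + (1 - / q) * x * (t1 * x + t0))
                 = (q - 1) * t1 * (x - a2) * (x - b2)) ->
  0 < a2 -> a2 <= b2 ->
  t1 / s0 < 0 ->
  exp (alpha * ln q) = / q * ((q - 1) * t1) / s0 ->
  exists (c : nat -> nat -> R) (d : nat -> R),
    (forall n : nat, c n n <> 0) /\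
    (forall n : nat,
       solves_qEHT q (fun _ => s0) (fun x => t1 * x + t0)
         (lambda_n q n t1 0) (poly_eval (c n) n)) /\
    (forall n : nat, d n <> 0) /\
    (forall m n : nat,
       is_series
         (jackson_term q b2
            (fun x => poly_eval (c n) n x * poly_eval (c m) m x * rho q alpha a2 b2 x))
         (if Nat.eqb m n then d n else 0)).
Proof.
  intros Hq Hs0 Ht1 Hs Ha Hab _ Hal0.
  assert (H0 := Hs 0).
  assert (Hs0e : q * s0 = (q - 1) * t1 * a2 * b2).
  { replace (q * s0) with (q * (s0 + (1 - / q) * 0 * (t1 * 0 + t0))) by ring.
    rewrite H0. ring. }
  assert (Hal : exp (alpha * ln q) = / (a2 * b2)).
  { rewrite Hal0.
    assert (Hqt : (q - 1) * t1 <> 0) by (apply Rmult_integral_contrapositive; split; lra).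
    replace (/ q * ((q - 1) * t1) / s0) with ((q - 1) * t1 / (q * s0)) by (field; lra).
    rewrite Hs0e. field. repeat split; lra. }
  set (P := fun n => poly_eval (cc q s0 t0 t1 n) n).
  assert (Hterm : forall n m j,
    jackson_term q b2 (fun x => P n x * P m x * rho q alpha a2 b2 x) j
    = Wt q alpha a2 b2 j * (P n (xj q b2 j) * P m (xj q b2 j))).
  { intros. unfold Wt, jackson_term, xj. ring. }
  assert (Heig : forall n x, Lf q s0 t0 t1 (P n) x = qn q n * t1 * P n x).
  { intros n x. pose proof (cc_solves q s0 t0 t1 n Hq Ht1 x) as E.
    rewrite lambda_qn in E by lra. unfold Lf. fold (P n) in E. lra. }
  exists (fun n => cc q s0 t0 t1 n),
    (fun n => Series (jackson_term q b2 (fun x => P n x * P n x * rho q alpha a2 b2 x))).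
  split; [|split; [|split]].
  - intro n. rewrite cc_nn. lra.
  - intro n. apply cc_solves; auto.
  - intro n.
    set (a := jackson_term q b2 (fun x => P n x * P n x * rho q alpha a2 b2 x)).
    assert (Ha0 : forall j, 0 <= a j).
    { intro j. unfold a. rewrite Hterm. apply Rmult_le_pos.
      left; apply Wt_pos; auto. nra. }
    assert (Hex : ex_series a).
    { apply (exs_ext (fun j => Wt q alpha a2 b2 j * (P n (xj q b2 j) * P n (xj q b2 j)))).
      - intro; unfold a; rewrite Hterm; reflexivity.
      - apply ser_poly2; auto. }
    assert (Hj : exists j, P n (xj q b2 j) <> 0).
    { apply NNPP. intro Hn.
      apply (nonvanish q b2 (cc q s0 t0 t1 n) n 0 Hq ltac:(lra)).
      - rewrite cc_nn; lra.
      - intros j _. apply NNPP. intro E. apply Hn. exists j. exact E. }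
    destruct Hj as [j0 Hj0].
    assert (Hpos : 0 < a j0).
    { unfold a. rewrite Hterm. apply Rmult_lt_0_compat. apply Wt_pos; auto.
      apply Rsqr_pos_lt in Hj0. unfold Rsqr in Hj0. exact Hj0. }
    assert (Hle := is_lim_seq_le_loc (fun _ => a j0) (sum_n a) (a j0) (Series a)).
    assert (Rbar_le (a j0) (Series a)).
    { apply Hle.
      - exists j0. intros J HJ. rewrite sum_n_Reals. apply sum_ge_term; auto.
      - apply is_lim_seq_const.
      - exact (Series_correct a Hex). }
    simpl in H. lra.
  - intros m n. destruct (Nat.eqb_spec m n) as [->|Hmn].
    + apply Series_correct.
      apply (exs_ext (fun j => Wt q alpha a2 b2 j * (P n (xj q b2 j) * P n (xj q b2 j)))).
      * intro; rewrite Hterm; reflexivity.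
      * apply ser_poly2; auto.
    + set (k := (qn q n - qn q m) * t1).
      assert (Hk : k <> 0).
      { unfold k. apply Rmult_integral_contrapositive. split; auto.
        destruct (Nat.lt_total n m) as [L|[L|L]];
          try (pose proof (qn_lt q _ _ ltac:(lra) L); lra); lia. }
      assert (Htel := fun J => tele q s0 t0 t1 alpha a2 b2 (P n) (P m) J Hq Ha Hab Hs Hal).
      assert (Hbd := bd_lim q s0 alpha a2 b2 (cc q s0 t0 t1 n) n (cc q s0 t0 t1 m) m Hq Ha Hab Hal).
      change (is_lim_seq (sum_n (jackson_term q b2
          (fun x => P n x * P m x * rho q alpha a2 b2 x))) 0).
      replace (Finite 0) with (Rbar_mult (/ k) 0) by (simpl; f_equal; ring).
      eapply is_lim_seq_ext; [|apply is_lim_seq_scal_l; exact Hbd].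
      intro J. simpl. rewrite sum_n_Reals.
      fold (P n) (P m). rewrite <- Htel.
      rewrite <- (sum_eq (fun j => k * jackson_term q b2
          (fun x => P n x * P m x * rho q alpha a2 b2 x) j)).
      * rewrite sum_scal_l. field. auto.
      * intros j _. rewrite Hterm, !Heig. unfold k. ring.
Qed.
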